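(* Let $\eta>0$ and consider the network (NonAut-I-$\eta$) with species $\Lambda_1,\Lambda_2$ and reactions \[ 1:\ \eta\Lambda_1+\Lambda_2\to\emptyset,\qquad 2:\ \eta\Lambda_2+\Lambda_1\to\emptyset,\qquad \emptyset\to\Lambda_1,\qquad \emptyset\to\Lambda_2 \] (the last two being constant productions), with the associated ODEs \[ \begin{cases} [\dot\Lambda_1]=P_{\Lambda_1}-\eta\, r_1([\Lambda_1],[\Lambda_2])-r_2([\Lambda_2],[\Lambda_1]),\\ [\dot\Lambda_2]=P_{\Lambda_2}-r_1([\Lambda_1],[\Lambda_2])-\eta\, r_2([\Lambda_2],[\Lambda_1]), \end{cases} \] where $r_1,r_2$ are monotone chemical functions, under the kinetic symmetry constraints $r_1\equiv r_2\equiv r$ (as functions of their ordered arguments) and $P_{\Lambda_1}=P_{\Lambda_2}=P>0$. If $\eta\neq1$, the system has the capacity for zero-eigenvalue bifurcation and thus for differentiation, with bifurcation condition $\partial_1 r=\partial_2 r$ (partial derivatives of $r$ with respect to its first and second argument, evaluated at a homogeneous steady state $[\Lambda_1]=[\Lambda_2]$). The instability motif associated to a non-autocatalytic unstable-positive feedback which generates the necessary instability is the subnetwork with species $\{\Lambda_1,\Lambda_2\}$ and reactions $\{1:\ \eta\Lambda_1+\Lambda_2\to\dots,\ 2:\ \eta\Lambda_2+\Lambda_1\to\dots\}$.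
   Context: A rate function is monotone chemical if it is nonnegative, positive exactly when all its reactant concentrations are positive, independent of non-reactant concentrations, and has positive partial derivative in each reactant concentration at positive concentrations; kinetics are parameter-rich, so the partial derivatives at a positive steady state may be prescribed as arbitrary positive numbers. Capacity for zero-eigenvalue bifurcation means there are such admissible values at a homogeneous positive steady state for which the Jacobian is singular. For a network with stoichiometric matrix $S_{mj}$ (net production of species $m$ in reaction $j$), a $k$-Child-Selection triple consists of $k$ species $\kappa$, $k$ reactions $E_\kappa$ and a bijection $J:\kappa\to E_\kappa$ such that each species in $\kappa$ is a reactant of its assigned reaction; its CS-matrix is $S[\kappa]_{ml}=S_{m,J(X_l)}$. An unstable-positive feedback is a $k\times k$ CS-matrix with $\operatorname{sign}\det=(-1)^{k-1}$ and no proper principal $k'\times k'$ submatrix with determinant of sign $(-1)^{k'-1}$; it is non-autocatalytic if it is not Metzler (some off-diagonal entry negative). Its instability motif is the subnetwork consisting of the species $\kappa$ and reactions $E_\kappa$, disregarding other species. *)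

(* Defs.v *)
From HB Require Import structures.
From mathcomp Require Import all_boot all_order all_algebra.
Set Implicit Arguments.
Unset Strict Implicit.
Unset Printing Implicit Defensive.
Import Order.TTheory GRing.Theory Num.Theory.
Local Open Scope ring_scope.

Section General.
Variable R : realFieldType.

(** A reaction network with [n] species and [m] reactions is given by its
    stoichiometric matrix [S] ([S i j] = net production of species [i] in
    reaction [j]) and its reactant relation [reac i j] (species [i] is a
    reactant of reaction [j]). *)

Definition CS_triple n m (reac : 'I_n -> 'I_m -> bool) k
    (kappa : 'I_k -> 'I_n) (J : 'I_k -> 'I_m) : Prop :=
  [/\ injective kappa, injective J & forall l, reac (kappa l) (J l)].

Definition CS_matrix n m (S : 'M[R]_(n, m)) k
    (kappa : 'I_k -> 'I_n) (J : 'I_k -> 'I_m) : 'M[R]_k :=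
  \matrix_(l, l') S (kappa l) (J l').

Definition principal_minor k (M : 'M[R]_k) (A : {set 'I_k}) : R :=
  \det (\matrix_(i < #|A|, j < #|A|) M (enum_val i) (enum_val j)).

Definition unstable_positive k (M : 'M[R]_k) : Prop :=
  0 < (-1) ^+ k.-1 * \det M /\
  forall A : {set 'I_k}, (0 < #|A|)%N -> (#|A| < k)%N ->
    ~ (0 < (-1) ^+ (#|A|).-1 * principal_minor M A).

Definition non_autocatalytic k (M : 'M[R]_k) : Prop :=
  exists l l' : 'I_k, l != l' /\ M l l' < 0.

Definition motif_species n m k (kappa : 'I_k -> 'I_n) (J : 'I_k -> 'I_m)
  : {set 'I_n} := [set kappa l | l in 'I_k].
Definition motif_reactions n m k (kappa : 'I_k -> 'I_n) (J : 'I_k -> 'I_m)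
  : {set 'I_m} := [set J l | l in 'I_k].

(** The network NonAut-I-eta. Species: 0 = Lambda_1, 1 = Lambda_2.
    Reactions: 0 = (1: eta L1 + L2 -> 0), 1 = (2: eta L2 + L1 -> 0),
               2 = (0 -> L1), 3 = (0 -> L2). *)
Definition nonautI_S (eta : R) : 'M[R]_(2, 4) :=
  \matrix_(i < 2, j < 4)
    match val i, val j with
    | 0, 0 => - eta | 0, 1 => -1 | 0, 2 => 1
    | 1, 0 => -1 | 1, 1 => - eta | 1, 3 => 1
    | _, _ => 0
    end.

Definition nonautI_reac (i : 'I_2) (j : 'I_4) : bool := (val j < 2)%N.

(** Admissible values at a homogeneous positive steady state under the
    kinetic symmetry r1 = r2 = r, P_{L1} = P_{L2} = P:
    rate values v = (rho, rho, P, P) with rho = r(x,x) > 0, and reactivity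
    matrix Rm_{j,i} = d r_j / d [Lambda_i], with a = d_1 r(x,x) > 0,
    b = d_2 r(x,x) > 0 (r_2 is evaluated at ([L2],[L1])); the constant
    productions have zero derivatives. *)
Definition nonautI_rates (rho P : R) : 'cV[R]_4 :=
  \col_(j < 4) match val j with 0 | 1 => rho | _ => P end.

Definition nonautI_react (a b : R) : 'M[R]_(4, 2) :=
  \matrix_(j < 4, i < 2)
    match val j, val i with
    | 0, 0 => a | 0, 1 => b
    | 1, 0 => b | 1, 1 => a
    | _, _ => 0
    end.

Definition nonautI_jac (eta a b : R) : 'M[R]_2 :=
  nonautI_S eta *m nonautI_react a b.

Definition nonautI_admissible (eta P rho a b : R) : Prop :=
  [/\ 0 < rho, 0 < a, 0 < b & nonautI_S eta *m nonautI_rates rho P = 0].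

Definition nonautI_capacity (eta P : R) : Prop :=
  exists rho a b, nonautI_admissible eta P rho a b /\
                  \det (nonautI_jac eta a b) = 0.

End General.

Definition nonautI_rxn1 : 'I_4 := @Ordinal 4 0 erefl.
Definition nonautI_rxn2 : 'I_4 := @Ordinal 4 1 erefl.

(* Main.v *)
Require Import Defs.
From HB Require Import structures.
From mathcomp Require Import all_boot all_order all_algebra.
From mathcomp Require Import ring lra zify.
Import Order.TTheory GRing.Theory Num.Theory.
Local Open Scope ring_scope.

Lemma det22 (R : comPzRingType) (M : 'M[R]_2) :
  \det M = M 0 0 * M 1 1 - M 0 1 * M 1 0.
Proof.
rewrite (expand_det_row _ 0) !big_ord_recr !big_ord0 /= add0r.
rewrite /cofactor !det_mx11 !mxE /=.
have -> : (lift 0 0 : 'I_2) = 1 by apply/val_inj.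
have -> : (lift (@ord_max 1) 0 : 'I_2) = 0 by apply/val_inj.
have -> : (widen_ord (leqnSn 1) ord_max : 'I_2) = 0 by apply/val_inj.
have -> : (@ord_max 1 : 'I_2) = 1 by apply/val_inj.
rewrite /= expr0 expr1.
have -> : (lift 0 0 : 'I_2) = 1 by apply/val_inj.
rewrite mul1r mulN1r mulrN. by [].

Qed.

Lemma jac_det (R : realFieldType) (eta a b : R) :
  \det (nonautI_jac eta a b) = (eta - 1) * (eta + 1) * (a - b) * (a + b).
Proof.
rewrite det22 /nonautI_jac !mxE !big_ord_recr !big_ord0 /= !mxE /=.
ring.
Qed.

Lemma adm_rho (R : realFieldType) (eta P rho : R) :
  nonautI_S eta *m nonautI_rates rho P = 0 <-> P = (eta + 1) * rho.
Proof.
split.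
  move=> /(congr1 (fun M : 'cV_2 => M 0 0)); rewrite !mxE !big_ord_recr !big_ord0 /= !mxE /=.
  move=> H; apply/eqP; rewrite -subr_eq0; apply/eqP; rewrite -H; ring.
move=> ->; apply/matrixP => i j; rewrite !mxE !big_ord_recr !big_ord0 /= !mxE /=.
case: i => [[|[|i]] Hi] //=; ring.
Qed.

Lemma motif2 (kappa : 'I_2 -> 'I_2) (J : 'I_2 -> 'I_4) :
  CS_triple nonautI_reac kappa J ->
  motif_species kappa J = [set: 'I_2] /\
  motif_reactions kappa J = [set nonautI_rxn1; nonautI_rxn2].
Proof.
move=> [ikap iJ hr]; split.
  by apply/eqP; rewrite /motif_species eqEcard subsetT card_imset //= max_card.
apply/eqP; rewrite /motif_reactions eqEcard card_imset // card_ord cards2; apply/andP; split; last by case: (_ != _).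
apply/subsetP => x /imsetP [l _ ->]; have := hr l; rewrite /nonautI_reac !inE.
case: (J l) => [[|[|n]] Hn] //= _.
Qed.

Lemma up2 (R : realFieldType) (M : 'M[R]_2) :
  M 0 0 < 0 -> M 1 1 < 0 -> 0 < - \det M -> unstable_positive M.
Proof.
move=> h0 h1 hd; split; first by rewrite /= expr1 mulN1r.
have hneg : forall i, M i i < 0.
  move=> [[|[|//]] Hi].
    by rewrite (_ : Ordinal Hi = 0) //; apply/val_inj.
  by rewrite (_ : Ordinal Hi = 1) //; apply/val_inj.
have gen : forall n (f : 'I_n -> 'I_2), n = 1%N ->
    ~ (0 < (-1)^+n.-1 * \det (\matrix_(i<n, j<n) M (f i) (f j))).
  move=> n f en; subst n; rewrite expr0 mul1r det_mx11 mxE.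
  by rewrite (lt_gtF (hneg _)).
move=> A A0 A2; have eA : #|A| = 1%N by lia.
rewrite /principal_minor; exact: (gen _ _ eA).
Qed.

Theorem proposition4p3 (R : realFieldType) (eta P : R) :
  0 < eta -> 0 < P -> eta != 1 ->
  [/\ (* capacity for zero-eigenvalue bifurcation *)
      nonautI_capacity eta P,
      (* bifurcation condition d_1 r = d_2 r *)
      (forall rho a b, nonautI_admissible eta P rho a b ->
         \det (nonautI_jac eta a b) = 0 <-> a = b),
      (* a non-autocatalytic unstable-positive feedback exists, with the
         stated instability motif *)
      (exists k (kappa : 'I_k -> 'I_2) (J : 'I_k -> 'I_4),
         [/\ CS_triple nonautI_reac kappa J,
             unstable_positive (CS_matrix (nonautI_S eta) kappa J),
             non_autocatalytic (CS_matrix (nonautI_S eta) kappa J),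
             motif_species kappa J = [set: 'I_2] &
             motif_reactions kappa J = [set nonautI_rxn1; nonautI_rxn2]]) &
      (* and every such feedback has this instability motif *)
      (forall k (kappa : 'I_k -> 'I_2) (J : 'I_k -> 'I_4),
         CS_triple nonautI_reac kappa J ->
         unstable_positive (CS_matrix (nonautI_S eta) kappa J) ->
         non_autocatalytic (CS_matrix (nonautI_S eta) kappa J) ->
         motif_species kappa J = [set: 'I_2] /\
         motif_reactions kappa J = [set nonautI_rxn1; nonautI_rxn2])].
Proof.
move=> he hP hne.
have hep1 : 0 < eta + 1 by lra.
split.
- exists (P / (eta + 1)), 1, 1; split; first split.
  + exact: divr_gt0.
  + exact: ltr01.
  + exact: ltr01.
  + apply/adm_rho; field; by rewrite (gt_eqF hep1).
  + by rewrite jac_det subrr mulr0 mul0r.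
- move=> rho a b [hr ha hb _]; rewrite jac_det; split.
    have hab : 0 < a + b by lra.
    move/eqP; rewrite !mulf_eq0 !subr_eq0 (negbTE hne) (gt_eqF hep1) (gt_eqF hab) /= orbF.
    by move/eqP.
  by move=> ->; rewrite subrr mulr0 mul0r.
- have hw : (2 <= 4)%N by [].
  case: (ltgtP eta 1) => hlt; last by rewrite hlt eqxx in hne.
  + have hcs : CS_triple nonautI_reac id (widen_ord hw).
      split; [by move=> x y | by move=> x y /(congr1 val) /= /val_inj | by move=> l; rewrite /nonautI_reac /= ltn_ord].
    have [h1 h2] := motif2 _ _ hcs.
    exists 2%N, id, (widen_ord hw); split => //.
      apply: up2; rewrite ?det22 /CS_matrix !mxE /=; nra.
    by exists 0, 1; split => //; rewrite !mxE /=; lra.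
  + have hcs : CS_triple nonautI_reac id (fun l => widen_ord hw (rev_ord l)).
      split; [by move=> x y | | by move=> l; exact: (ltn_ord (rev_ord l))].
      by move=> x y /(congr1 val) e; apply/rev_ord_inj/val_inj; exact: e.
    have [h1 h2] := motif2 _ _ hcs.
    exists 2%N, id, (fun l => widen_ord hw (rev_ord l)); split => //.
      apply: up2; rewrite ?det22 /CS_matrix !mxE /=; nra.
    by exists 0, 1; split => //; rewrite !mxE /=; lra.
- move=> k kappa J hcs hup [l [l' [hll' _]]].
  have hk : k = 2%N.
    have := leq_card kappa (let: And3 i _ _ := hcs in i); rewrite !card_ord => hk2.
    move: hll'; rewrite -(inj_eq val_inj) /= => hne'.
    have := ltn_ord l; have := ltn_ord l'; lia.
  subst k; exact: motif2.
Qed.
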